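(* Let $k\ge1$ and let $\Sigma_k=\{(f,g)\in P_k\times P_k: f\le g\}$. Define $r(f,g)=(f,f)$, $s(f,g)=(g,g)$, $(f,g)(g,h)=(f,h)$, and $d(f,g)=h(g)-h(f)$. Then $d$ takes values in $\mathbb{N}^k$, and with these structure maps $(\Sigma_k,d)$ is a $k$-graph; moreover $d$ maps $\Sigma_k$ onto $\{n\in\mathbb{N}^k: n\le\mathbf{1}_k\}$.
   Context: A function $f:\{0,\dots,k\}\to\{0,\dots,k\}$ is a $k$-placing if $f(j)=|\{i: f(i)<f(j)\}|$ for all $j\le k$; $P_k$ is the set of $k$-placings, ordered by $f\le g$ iff $f(i)\le g(i)$ for all $i$. The height function $h:P_k\to\mathbb{N}^k$ is given by $h(f)_i=1$ if $f^{-1}(i)\neq\emptyset$ and $h(f)_i=0$ otherwise, for $1\le i\le k$. $\mathbf{1}_k=(1,\dots,1)\in\mathbb{N}^k$. A $k$-graph is a countable small category with a functor $d$ to $\mathbb{N}^k$ such that, writing $\Lambda^n=d^{-1}(n)$, composition is a bijection from composable pairs in $\Lambda^m\times\Lambda^n$ onto $\Lambda^{m+n}$. *)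

(* Defs.v *)
From HB Require Import structures.
From mathcomp Require Import all_boot all_order all_algebra.
Set Implicit Arguments. Unset Strict Implicit. Unset Printing Implicit Defensive.

(** The carrier [A] is a
    countable type of morphisms; objects are identified with identity
    morphisms ([r x], [s x] are the identities at the range and source of x).
    [comp x y] is the composite "x y" (defined when [s x = r y]; junk otherwise). *)

Definition addv (k : nat) (m n : {ffun 'I_k -> nat}) : {ffun 'I_k -> nat} :=
  [ffun i => m i + n i].

Definition zerov (k : nat) : {ffun 'I_k -> nat} := [ffun => 0].

Definition is_kgraph (k : nat) (A : countType) (r s : A -> A)
  (comp : A -> A -> A) (d : A -> {ffun 'I_k -> nat}) : Prop :=
  (forall x, r (r x) = r x /\ s (r x) = r x) /\
  (forall x, r (s x) = s x /\ s (s x) = s x) /\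
  (forall x y, s x = r y -> r (comp x y) = r x /\ s (comp x y) = s y) /\
  (forall x, comp (r x) x = x /\ comp x (s x) = x) /\
  (forall x y z, s x = r y -> s y = r z ->
      comp (comp x y) z = comp x (comp y z)) /\
  (forall x, d (r x) = zerov k) /\
  (forall x y, s x = r y -> d (comp x y) = addv (d x) (d y)) /\
  (forall (m n : {ffun 'I_k -> nat}) (x : A), d x = addv m n ->
      exists! p : A * A,
        [/\ s p.1 = r p.2, d p.1 = m, d p.2 = n & comp p.1 p.2 = x]).

Definition is_placing (k : nat) (f : {ffun 'I_k.+1 -> 'I_k.+1}) : bool :=
  [forall j, (f j : nat) == #|[pred i | (f i < f j)%N]|].

Definition placing (k : nat) := {f : {ffun 'I_k.+1 -> 'I_k.+1} | is_placing f}.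

Definition ple (k : nat) (f g : placing k) : bool :=
  [forall i, (val f i <= val g i)%N].

(** height: h(f)_i = 1 iff i is in the image of f, for 1 <= i <= k;
    coordinate (i : 'I_k) stands for the index i+1. *)
Definition height (k : nat) (f : placing k) : 'I_k -> nat :=
  fun i => nat_of_bool [exists j, (val f j : nat) == i.+1].

Definition Sigma (k : nat) := {p : placing k * placing k | ple p.1 p.2}.

Definition sig_r (k : nat) (x : Sigma k) : Sigma k :=
  insubd x ((val x).1, (val x).1).
Definition sig_s (k : nat) (x : Sigma k) : Sigma k :=
  insubd x ((val x).2, (val x).2).
(* (f,g)(g,h) = (f,h); junk (= x) on non-composable pairs *)
Definition sig_comp (k : nat) (x y : Sigma k) : Sigma k :=
  insubd x ((val x).1, (val y).2).

Definition sig_dZ (k : nat) (x : Sigma k) (i : 'I_k) : int :=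
  ((height (val x).2 i)%:Z - (height (val x).1 i)%:Z)%R.

(* the same difference as an element of N^k (truncated subtraction; it agrees
   with sig_dZ by the first conclusion of the theorem) *)
Definition sig_d (k : nat) (x : Sigma k) : {ffun 'I_k -> nat} :=
  [ffun i => height (val x).2 i - height (val x).1 i].

(* Main.v *)
Require Import Defs.
From mathcomp Require Import all_boot all_order all_algebra.
From mathcomp Require Import zify.
Set Implicit Arguments. Unset Strict Implicit. Unset Printing Implicit Defensive.

Lemma card_lt_ord n (j : 'I_n) : #|[pred i : 'I_n | i < j]| = j.
Proof.
have le : j <= n by apply: ltnW.
have inj : injective (widen_ord le) by move=> a b /(congr1 val) /= /val_inj.
rewrite -[RHS](card_ord j) -(card_image inj).
apply: eq_card => i; rewrite inE; apply/idP/imageP.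
- move=> hi; exists (Ordinal hi) => //; exact: val_inj.
- by case=> x _ ->; rewrite /= ltn_ord.
Qed.

Section S.
Variable k : nat.
Implicit Types f g h : placing k.

Definition pv f (j : 'I_k.+1) : nat := val f j.
Definition NN f c := #|[pred i | pv f i < c]|.
Definition im f c := [exists j, pv f j == c].

Lemma pv_le f j : pv f j <= k.
Proof. by rewrite -ltnS; exact: ltn_ord. Qed.

Lemma placing_eq f j : pv f j = NN f (pv f j).
Proof. by have /forallP/(_ j)/eqP := valP f. Qed.

Lemma N_spec f c : (forall i, pv f i < c) \/ exists m, c <= pv f m /\ NN f c = pv f m.
Proof.
case: (boolP [exists i, c <= pv f i]) => [/existsP ex|/existsPn nex]; last first.
  by left=> i; move: (nex i); rewrite -ltnNge.
right.
have exv : exists v, [exists i, (c <= pv f i) && (pv f i == v)].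
  by case: ex => i hi; exists (pv f i); apply/existsP; exists i; rewrite hi eqxx.
case: (ex_minnP exv) => v /existsP [m /andP [hcm /eqP hmv]] hmin.
exists m; split => //.
rewrite [RHS]placing_eq /NN; apply: eq_card => i; rewrite !inE.
apply/idP/idP => hi.
- exact: leq_trans hi hcm.
- rewrite ltnNge; apply/negP => hci.
  have : v <= pv f i by apply: hmin; apply/existsP; exists i; rewrite hci eqxx.
  lia.
Qed.

Lemma NN_all f c : (forall i, pv f i < c) -> NN f c = k.+1.
Proof.
move=> hall; rewrite /NN -[RHS](card_ord k.+1); apply: eq_card => i.
by rewrite !inE hall.
Qed.

Lemma N_ge f c : c <= k.+1 -> c <= NN f c.
Proof.
move=> hc; case: (N_spec f c) => [hall|[m [h1 ->]]] //.
by rewrite NN_all.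
Qed.

Lemma im_of_N f c : c <= k -> NN f c = c -> im f c.
Proof.
move=> hc hN; case: (N_spec f c) => [hall|[m [h1 h2]]].
  rewrite NN_all // in hN; lia.
by apply/existsP; exists m; rewrite -h2 hN.
Qed.

Lemma N_of_im f c : im f c -> NN f c = c.
Proof. by case/existsP => j /eqP <-; rewrite -placing_eq. Qed.

Lemma im0 f : im f 0.
Proof. by apply: im_of_N => //; apply: eq_card0 => i; rewrite inE. Qed.

Lemma im_le f c : im f c -> c <= k.
Proof. by case/existsP => j /eqP <-; rewrite -ltnS; exact: ltn_ord. Qed.

Lemma ple_pv f g j : ple f g -> pv f j <= pv g j.
Proof. by move/forallP/(_ j). Qed.

Lemma ple_N f g c : ple f g -> NN g c <= NN f c.
Proof.
move=> hfg; apply: subset_leq_card; apply/subsetP => i; rewrite !inE => hi.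
exact: leq_ltn_trans (ple_pv i hfg) hi.
Qed.

Lemma im_mono f g c : ple f g -> im f c -> im g c.
Proof.
move=> hfg hf; apply: im_of_N; first exact: im_le hf.
have e := N_of_im hf. have := ple_N c hfg.
have := @N_ge g c (leq_trans (im_le hf) (leqnSn k)). lia.
Qed.

Lemma mx g h c j : ple g h -> im g c -> c <= pv h j -> c <= pv g j.
Proof.
move=> hgh hg hc; rewrite leqNgt; apply/negP => hlt.
have e := N_of_im hg.
have hsub : [pred i | pv h i < c] \subset [pred i | pv g i < c].
  apply/subsetP => i; rewrite !inE => hi; exact: leq_ltn_trans (ple_pv i hgh) hi.
have hcard : NN g c <= NN h c.
  rewrite e; apply: N_ge; exact: leq_trans (im_le hg) (leqnSn k).
have hEq : #|[pred i | pv h i < c]| = #|[pred i | pv g i < c]|.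
  by apply/eqP; rewrite eqn_leq (subset_leq_card hsub); exact: hcard.
move/(subset_cardP hEq): hsub => heq.
have := heq j; rewrite !inE hlt; lia.
Qed.

Lemma uniq_pl g1 g2 h : ple g1 h -> ple g2 h -> (forall c, im g1 c = im g2 c) -> g1 = g2.
Proof.
move=> h1 h2 him; apply: val_inj; apply/ffunP => j.
suff : pv g1 j = pv g2 j by move=> e; apply: val_inj.
apply/eqP; rewrite eqn_leq; apply/andP; split.
- apply: (mx h2); first by rewrite -him; apply/existsP; exists j.
  exact: ple_pv.
- apply: (mx h1); first by rewrite him; apply/existsP; exists j.
  exact: ple_pv.
Qed.

Lemma im_eq_height g1 g2 : (forall i : 'I_k, im g1 i.+1 = im g2 i.+1) ->
  forall c, im g1 c = im g2 c.
Proof.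
move=> hi [|c]; first by rewrite !im0.
case: (ltnP c k) => hc; first exact: (hi (Ordinal hc)).
case e1: (im g1 c.+1); first by have := im_le e1; lia.
case e2: (im g2 c.+1) => //; by have := im_le e2; lia.
Qed.

Section Constr.
Variables (h : placing k) (C : pred nat).
Hypothesis hC0 : C 0.
Hypothesis hCim : forall c, C c -> c <= k -> im h c.

Definition gmax (j : 'I_k.+1) : nat :=
  \max_(c in [pred c : 'I_k.+1 | C c && (c <= pv h j)]) c.

Lemma gmax_lt j : gmax j < k.+1.
Proof. rewrite ltnS; apply/bigmax_leqP => c _; rewrite -ltnS; exact: ltn_ord. Qed.

Lemma gmax_spec j : C (gmax j) && (gmax j <= pv h j).
Proof.
have : 0 < #|[pred c : 'I_k.+1 | C c && (c <= pv h j)]|.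
  apply/card_gt0P; exists ord0; by rewrite inE hC0.
case/(eq_bigmax_cond val) => c hc; rewrite /gmax => ->.
by rewrite inE in hc.
Qed.

Lemma gmax_ge c j : C c -> c <= pv h j -> c <= gmax j.
Proof.
move=> hc hcj.
have hck : c < k.+1 by apply: leq_ltn_trans hcj _; exact: ltn_ord.
have := @leq_bigmax_cond _ (fun x => x \in [pred c : 'I_k.+1 | C c && (c <= pv h j)])
   val (Ordinal hck).
by rewrite inE hc hcj => /(_ isT).
Qed.

Definition gfun : {ffun 'I_k.+1 -> 'I_k.+1} := [ffun j => inord (gmax j)].

Lemma gfun_val j : (gfun j : nat) = gmax j.
Proof. by rewrite ffunE inordK // gmax_lt. Qed.

Lemma gfun_placing : is_placing gfun.
Proof.
apply/forallP => j; apply/eqP.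
have /andP [hCj hle] := gmax_spec j.
have himj := hCim hCj (leq_trans hle (pv_le h j)).
rewrite gfun_val -{1}(N_of_im himj) /NN; apply: eq_card => i; rewrite !inE !gfun_val.
apply/idP/idP => hi.
- have /andP [_ hi2] := gmax_spec i. exact: leq_ltn_trans hi2 hi.
- rewrite ltnNge; apply/negP => hge.
  have := gmax_ge hCj hge; lia.
Qed.

Definition gpl : placing k := exist _ gfun gfun_placing.

Lemma gpl_pv j : pv gpl j = gmax j.
Proof. exact: gfun_val. Qed.

End Constr.

Lemma factor f h (m : 'I_k -> nat) : ple f h -> (forall i, 0 < m i -> im h i.+1) ->
  exists g, [/\ ple f g, ple g h & forall i : 'I_k, im g i.+1 = im f i.+1 || (0 < m i)].
Proof.
move=> hfh hm.
pose C := fun c => im f c || [exists i : 'I_k, (c == i.+1) && (0 < m i)].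
have hC0 : C 0 by rewrite /C im0.
have hCim : forall c, C c -> c <= k -> im h c.
  move=> c /orP [hf|/existsP [i /andP [/eqP -> hi]]] _; first exact: im_mono hf.
  exact: hm.
exists (gpl hC0 hCim); split.
- apply/forallP => j; rewrite -[X in X <= _]/(pv f j) -[X in _ <= X]/(pv (gpl hC0 hCim) j).
  rewrite gpl_pv; apply: gmax_ge; last exact: ple_pv.
  by rewrite /C; apply/orP; left; apply/existsP; exists j.
- apply/forallP => j; rewrite -[X in X <= _]/(pv (gpl hC0 hCim) j) -[X in _ <= X]/(pv h j).
  rewrite gpl_pv; by case/andP: (gmax_spec h hC0 j).
- move=> i.
  have -> : im f i.+1 || (0 < m i) = C i.+1.
    rewrite /C; congr (_ || _); apply/idP/existsP.
    + by move=> hi; exists i; rewrite eqxx.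
    + case=> i' /andP [/eqP e hi']; have -> : i = i' by apply: val_inj; case: e.
      done.
  apply/existsP/idP.
  + case=> j /eqP <-; rewrite gpl_pv; by case/andP: (gmax_spec h hC0 j).
  + move=> hC; have /existsP [j /eqP hj] := hCim _ hC (ltn_ord i).
    exists j; rewrite gpl_pv eqn_leq; apply/andP; split.
    * by case/andP: (gmax_spec h hC0 j) => _; rewrite hj.
    * by apply: gmax_ge => //; rewrite hj.
Qed.

End S.

Section T.
Variable k : nat.

Lemma heightE (f : placing k) i : height f i = im f i.+1.
Proof. by []. Qed.

Lemma hmono (f g : placing k) i : ple f g -> height f i <= height g i.
Proof.
move=> hfg; rewrite !heightE; case hf: (im f i.+1) => //=.
by rewrite (im_mono hfg hf).
Qed.

Lemma ple_refl (f : placing k) : ple f f.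
Proof. by apply/forallP => i. Qed.

Lemma ple_trans (f g h : placing k) : ple f g -> ple g h -> ple f h.
Proof.
move=> /forallP a /forallP b; apply/forallP => i; exact: leq_trans (a i) (b i).
Qed.

Lemma val_r (x : Sigma k) : val (sig_r x) = ((val x).1, (val x).1).
Proof. by rewrite /sig_r insubdK //; apply: ple_refl. Qed.

Lemma val_s (x : Sigma k) : val (sig_s x) = ((val x).2, (val x).2).
Proof. by rewrite /sig_s insubdK //; apply: ple_refl. Qed.

Lemma val_comp (x y : Sigma k) : ple (val x).1 (val y).2 ->
  val (sig_comp x y) = ((val x).1, (val y).2).
Proof. by move=> p; rewrite /sig_comp insubdK. Qed.

Lemma sr_eq (x y : Sigma k) : sig_s x = sig_r y -> (val x).2 = (val y).1.
Proof. by move=> /(congr1 val); rewrite val_s val_r => -[]. Qed.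

Lemma dmono (x : Sigma k) i : height (val x).1 i <= height (val x).2 i.
Proof. apply: hmono; exact: (valP x). Qed.

Lemma arith1 (a b : bool) (m n : nat) : (b : nat) - (a : nat) = m + n ->
  ((a || (0 < m)) : nat) - a = m /\ (b : nat) - (a || (0 < m)) = n.
Proof. by move: a b => [] [] /=; case: m => [|m'] /=; lia. Qed.

Lemma arith2 (a b : bool) (m : nat) : (a : nat) <= b -> (b : nat) - (a : nat) = m ->
  b = a || (0 < m).
Proof. by move: a b => [] [] /=; case: m => [|m'] /=; lia. Qed.

Lemma hsum (f g h : placing k) i : ple f g -> ple g h ->
  height h i - height f i = (height g i - height f i) + (height h i - height g i).
Proof. move=> a b; have := hmono i a; have := hmono i b; lia. Qed.

Lemma kgraph : is_kgraph (@sig_r k) (@sig_s k) (@sig_comp k) (@sig_d k).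
Proof.
split; [|split; [|split; [|split; [|split; [|split; [|split]]]]]].
- by move=> x; split; apply: val_inj; rewrite !(val_r, val_s).
- by move=> x; split; apply: val_inj; rewrite !(val_r, val_s).
- move=> x y /sr_eq e.
  have p : ple (val x).1 (val y).2.
    apply: ple_trans (valP x) _; rewrite e; exact: (valP y).
  by split; apply: val_inj; rewrite ?val_r ?val_s val_comp.
- move=> [[a b] pab]; split; apply: val_inj.
  + by rewrite val_comp val_r //.
  + by rewrite val_comp val_s //.
- move=> x y z /sr_eq e1 /sr_eq e2.
  have pxy : ple (val x).1 (val y).2.
    apply: ple_trans (valP x) _; rewrite e1; exact: (valP y).
  have pyz : ple (val y).1 (val z).2.
    apply: ple_trans (valP y) _; rewrite e2; exact: (valP z).
  have pxz : ple (val x).1 (val z).2.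
    apply: ple_trans pxy _; rewrite e2; exact: (valP z).
  have e_xy := val_comp pxy; have e_yz := val_comp pyz.
  apply: val_inj; rewrite [LHS]val_comp ?e_xy // [RHS]val_comp ?e_yz //.
- by move=> x; apply/ffunP => i; rewrite !ffunE val_r subnn.
- move=> x y /sr_eq e.
  have p : ple (val x).1 (val y).2.
    apply: ple_trans (valP x) _; rewrite e; exact: (valP y).
  apply/ffunP => i; rewrite !ffunE val_comp //=.
  rewrite e; apply: hsum; [rewrite -e; exact: (valP x) | exact: (valP y)].
- move=> m n x hd.
  have hfh : ple (val x).1 (val x).2 := valP x.
  have hdi : forall i, height (val x).2 i - height (val x).1 i = m i + n i.
    by move=> i; have := congr1 (fun F : {ffun _ -> _} => F i) hd; rewrite !ffunE.
  have hm : forall i, 0 < m i -> im (val x).2 i.+1.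
    move=> i hi; move: (hdi i); rewrite !heightE.
    case: (im (val x).2 i.+1) => //= e; exfalso; lia.
  have [g [hfg hgh himg]] := factor hfh hm.
  exists ((exist _ ((val x).1, g) hfg : Sigma k), (exist _ (g, (val x).2) hgh : Sigma k)).
  split.
  + split.
    * by apply: val_inj; rewrite val_s val_r.
    * apply/ffunP => i; rewrite !ffunE /= [height g _]heightE himg.
      exact: (proj1 (arith1 (hdi i))).
    * apply/ffunP => i; rewrite !ffunE /= [height g _]heightE himg.
      exact: (proj2 (arith1 (hdi i))).
    * apply: val_inj; rewrite val_comp //=; by case: (val x).
  + move=> [[[a b] pab] [[b' c] pbc]] [/sr_eq /= e hd1 hd2 hc].
    subst b'.
    have := congr1 val hc; rewrite val_comp //=; last exact: ple_trans pab pbc.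
    move=> exc; have ea : a = (val x).1 by rewrite -[RHS]/(sval x).1 -exc.
    have ec : c = (val x).2 by rewrite -[RHS]/(sval x).2 -exc.
    subst a c.
    have hb : b = g.
      apply: (uniq_pl pbc hgh); apply: im_eq_height => i.
      have := congr1 (fun F : {ffun _ -> _} => F i) hd1; rewrite !ffunE /= => e1.
      rewrite himg; apply: arith2 e1; exact: hmono.
    subst b.
    by congr pair; apply: val_inj.
Qed.

End T.

Section U.
Variable k : nat.

Lemma zpl_p : is_placing ([ffun => ord0] : {ffun 'I_k.+1 -> 'I_k.+1}).
Proof.
apply/forallP => j; rewrite ffunE; apply/eqP; symmetry.
by apply: eq_card0 => i; rewrite inE ffunE.
Qed.
Definition zpl : placing k := exist (@is_placing k) _ zpl_p.

Lemma ipl_p : is_placing ([ffun j => j] : {ffun 'I_k.+1 -> 'I_k.+1}).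
Proof.
apply/forallP => j; rewrite ffunE; apply/eqP; rewrite -[LHS]card_lt_ord.
by apply: eq_card => i; rewrite !inE ffunE.
Qed.
Definition ipl : placing k := exist (@is_placing k) _ ipl_p.

Lemma ple_zi : ple zpl ipl.
Proof. by apply/forallP => i; rewrite /= ffunE. Qed.

Definition x0 : Sigma k := exist _ (zpl, ipl) ple_zi.

Lemma height_z i : height zpl i = 0.
Proof. rewrite heightE; case: (boolP (im zpl i.+1)) => // /existsP [j]; by rewrite /pv /= ffunE. Qed.

Lemma height_i (i : 'I_k) : height ipl i = 1.
Proof.
rewrite heightE; apply/eqP; rewrite eqb1; apply/existsP.
have hi : i.+1 < k.+1 by rewrite ltnS.
by exists (Ordinal hi); rewrite /pv /= ffunE.
Qed.

End U.

Theorem proposition5p4 (k : nat) (hk : (1 <= k)%N) :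
  [/\ (forall (x : Sigma k) (i : 'I_k), (0 <= sig_dZ x i)%R),
      is_kgraph (@sig_r k) (@sig_s k) (@sig_comp k) (@sig_d k) &
      (forall n : {ffun 'I_k -> nat},
         (forall i, (n i <= 1)%N) <-> exists x : Sigma k, sig_d x = n)].
Proof.
split.
- move=> x i; rewrite /sig_dZ Num.Theory.subr_ge0 lez_nat; exact: dmono.
- exact: kgraph.
- move=> n; split.
  + move=> hn.
    have hd : sig_d (x0 k) = Defs.addv n [ffun i => 1 - n i].
      apply/ffunP => i; rewrite !ffunE /= height_z height_i.
      have := hn i; lia.
    have [[p1 p2] [[_ hd1 _ _] _]] :=
      (proj2 (proj2 (proj2 (proj2 (proj2 (proj2 (proj2 (@kgraph k)))))))) _ _ _ hd.
    by exists p1.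
  + move=> [x <-] i; rewrite ffunE; exact: leq_trans (leq_subr _ _) (leq_b1 _).
Qed.
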